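(* Consider the draining problem described in the context, and let $\delta=\sqrt{r^2(B-A)/B}$. If $$\check R\ \ge\ -\left(A-\tfrac{2}{3}B\right)r-\delta(A-B)-\frac{\delta^3}{3r^2}B,$$ then the optimal cost $T^\ast$ of the draining problem satisfies $T^\ast\ge 2r$.
   Context: $\|\cdot\|$ is the Euclidean norm. A single target sits at the fixed position $x\in\mathbb{R}^2$, with sensing range $r>0$ and constants $A,B$ with $B>A$ (uncertainty accumulation rate $A$). The agent has position $s(t)\in\mathbb{R}^2$ with dynamics $\dot s(t)=u(t)$ and control constraint $\|u(t)\|\le 1$. Define $p(s)=\max\{0,\,1-\|s-x\|^2/r^2\}$ and $f_R(R,s)=0$ if $R=0$ and $A-Bp(s)<0$, and $f_R(R,s)=A-Bp(s)$ otherwise. The entrance point $s^\varphi$ and departure point $s^\psi$ are the points where the agent starts, respectively stops, sensing the target, so $\|s^\varphi-x\|=\|s^\psi-x\|=r$; $\check R$ is the uncertainty at arrival. The draining problem is: minimize $T$ over $T$ and controls $u:[0,T]\to\mathbb{R}^2$ subject to $\dot s=u$, $\dot R=f_R(R,s)$, $\|u(t)\|^2\le1$, $\min_{\tau\in[0,T]}R(\tau)=0$, $s(0)=s^\varphi$, $s(T)=s^\psi$, $R(0)=\check R$. *)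

(* Defs.v *)
From HB Require Import structures.
From mathcomp Require Import all_boot all_order all_algebra.
From mathcomp Require Import all_classical all_reals all_analysis.
Set Implicit Arguments. Unset Strict Implicit. Unset Printing Implicit Defensive.
Import Order.TTheory GRing.Theory Num.Theory.
Local Open Scope classical_set_scope.
Local Open Scope ring_scope.

Section Draining.
Variable R : realType.

Definition dr_sqdist (a b : R * R) : R := (a.1 - b.1) ^+ 2 + (a.2 - b.2) ^+ 2.
Definition dr_dist (a b : R * R) : R := Num.sqrt (dr_sqdist a b).

Definition dr_p (x : R * R) (r : R) (s : R * R) : R :=
  Num.max 0 (1 - dr_sqdist s x / r ^+ 2).

Definition dr_fR (A B : R) (x : R * R) (r : R) (Rv : R) (s : R * R) : R :=
  if (Rv == 0) && (A - B * dr_p x r s < 0) then 0 else A - B * dr_p x r s.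

Definition dr_delta (A B r : R) : R := Num.sqrt (r ^+ 2 * (B - A) / B).

(* Feasibility of (T, u) for the draining problem, with state trajectories
   s (position) and Rt (uncertainty) understood as absolutely continuous
   (Caratheodory) solutions on [0,T]:
     s(t) = s(0) + \int_0^t u,  Rt(t) = Rt(0) + \int_0^t f_R(Rt, s). *)
Definition dr_Icc0 (t : R) : set R := `[0, t].

Definition draining_feasible (A B : R) (x : R * R) (r : R)
    (sphi spsi : R * R) (Rc : R) (T : R)
    (u s : R -> R * R) (Rt : R -> R) : Prop :=
  measurable_fun `[0, T] (fun t => (u t).1) /\
      measurable_fun `[0, T] (fun t => (u t).2) /\
      (forall t, t \in `[0, T] -> (u t).1 ^+ 2 + (u t).2 ^+ 2 <= 1) /\
      (forall t, t \in `[0, T] ->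
         (\int[lebesgue_measure]_(tau in dr_Icc0 t) ((u tau).1)%:E
            = ((s t).1 - (s 0).1)%:E)%E /\
         (\int[lebesgue_measure]_(tau in dr_Icc0 t) ((u tau).2)%:E
            = ((s t).2 - (s 0).2)%:E)%E) /\
      lebesgue_measure.-integrable `[0, T]
         (fun tau => (dr_fR A B x r (Rt tau) (s tau))%:E) /\
      (forall t, t \in `[0, T] ->
         (\int[lebesgue_measure]_(tau in dr_Icc0 t) (dr_fR A B x r (Rt tau) (s tau))%:E
            = (Rt t - Rt 0)%:E)%E) /\
      ((forall t, t \in `[0, T] -> 0 <= Rt t) /\
       (exists2 t, t \in `[0, T] & Rt t = 0)) /\
      s 0 = sphi /\ s T = spsi /\
      Rt 0 = Rc.

End Draining.

(* Main.v *)
Require Import Defs.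
From mathcomp Require Import all_boot all_order all_algebra.
From mathcomp Require Import all_classical all_reals all_analysis.
From mathcomp Require Import ring lra.
Import Order.TTheory GRing.Theory Num.Theory numFieldNormedType.Exports.
Local Open Scope ring_scope.
Local Open Scope classical_set_scope.

Section S.
Variable R : realType.
Local Notation mu := (@lebesgue_measure R).

Lemma Lcmp (g F : R -> R) (T a b : R) (p : {poly R}) :
  mu.-integrable `[0, T] (fun t => (g t)%:E) ->
  (forall t, t \in `[0, T]%R -> (\int[mu]_(tau in dr_Icc0 t) (g tau)%:E = (F t - F 0)%:E)%E) ->
  0 <= a -> a <= b -> b <= T ->
  (forall t, a <= t <= b -> p^`().[t] <= g t) ->
  p.[b] - p.[a] <= F b - F a.
Proof.
move=> ig hF a0 ab bT hq.
case: (eqVneq a b) => [<-|anb]; first by rewrite !subrr.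
have ab' : a < b by rewrite lt_neqAle anb ab.
have mg := measurable_int _ ig.
have eU : `[0, b] = `[0, a] `|` `]a, b] :> set R.
  by apply: itv_bndbnd_setU; rewrite bnd_simp.
have dj : disj_set (`[0, a] : set R) `]a, b].
  apply/disj_setPS => z /= [].
  by rewrite !in_itv /= => /andP[_ za] /andP[az _]; move: (lt_le_trans az za); rewrite ltxx.
have HU := @integral_setU _ _ _ mu `[0, a] `]a, b] (fun t => (g t)%:E).
rewrite -eU in HU.
have := HU (measurable_itv _) (measurable_itv _) _ dj.
have sb : `[0, b] `<=` `[0, T] by apply: subset_itvl; rewrite bnd_simp.
move=> /(_ (measurable_funS (measurable_itv _) sb mg)).
have inT : forall z, 0 <= z -> z <= T -> z \in `[0, T]%R.
  by move=> z z0 zT; rewrite in_itv /= z0 zT.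
rewrite (hF b); last by apply: inT => //; exact: (le_trans a0 ab).
have := hF a (inT _ a0 (le_trans ab bT)); rewrite /dr_Icc0 => ->.
have sab : `[a, b] `<=` `[0, T] by apply: subset_itvScc; rewrite bnd_simp.
have sab' : `]a, b] `<=` `[0, T].
  by move=> z /=; rewrite !in_itv /= => /andP[az zb]; rewrite (le_trans a0 (ltW az)) (le_trans zb bT).
have igab : mu.-integrable `[a, b] (fun t => (g t)%:E) by apply: integrableS ig.
rewrite integral_itv_obnd_cbnd; last exact: (measurable_funS (measurable_itv _) sab' mg).
have cq : {within `[a, b], continuous (fun x : R => p^`().[x])}.
  by apply: continuous_subspaceT => x; apply: continuous_horner.
have iq : mu.-integrable `[a, b] (fun t => (p^`().[t])%:E).
  by apply: continuous_compact_integrable => //; exact: segment_compact.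
have Hle : (\int[mu]_(x in `[a, b]) (p^`().[x])%:E <= \int[mu]_(x in `[a, b]) (g x)%:E)%E.
  apply: le_integral => // x; rewrite inE /= in_itv /= => xab; rewrite lee_fin; exact: hq.
have FTC : (\int[mu]_(x in `[a, b]) (p^`().[x])%:E = (p.[b])%:E - (p.[a])%:E)%E.
  apply: continuous_FTC2 => //.
    split.
    - by move=> x _; apply: derivable_horner.
    - by apply: cvg_at_right_filter; apply: continuous_horner.
    - by apply: cvg_at_left_filter; apply: continuous_horner.
  by move=> x _; rewrite derive1E; apply: derive_val.
rewrite FTC in Hle.
move: Hle.
case: (\int[mu]_(x in `[a, b]) (g x)%:E)%E => [i| |] /=.
- rewrite -EFinD => Hle /eqP; rewrite eqe => /eqP E; rewrite lee_fin in Hle. lra.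
- by rewrite addey.
- by rewrite leeNy_eq.
Qed.
Lemma int_u (T : R) (f : R -> R) :
  measurable_fun `[0, T] f ->
  (forall t, t \in `[0, T]%R -> f t ^+ 2 <= 1) ->
  mu.-integrable `[0, T] (fun t => (f t)%:E).
Proof.
move=> mf hb.
have := @measurable_bounded_integrable _ _ _ mu f `[0, T] (measurable_itv _) _ mf.
apply.
  have := lebesgue_measure_itv `[0, T]%R; rewrite /= => ->.
  by case: ifP => _; rewrite ?ltry // -EFinD ltry.
exists 1; split => // M M1 x Ax.
have := hb x Ax => h.
rewrite /= (le_trans _ (ltW M1)) //.
have e : `|f x| ^+ 2 = f x ^+ 2 := real_normK (num_real _).
have n0 := normr_ge0 (f x).
nra.
Qed.


Lemma cs (a1 a2 b1 b2 : R) :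
  a1 * b1 + a2 * b2 <= Num.sqrt (a1 ^+ 2 + a2 ^+ 2) * Num.sqrt (b1 ^+ 2 + b2 ^+ 2).
Proof.
have h0 : 0 <= a1 ^+ 2 + a2 ^+ 2 by rewrite addr_ge0 // sqr_ge0.
rewrite -sqrtrM //; apply: le_trans (ler_norm _) _.
rewrite -sqrtr_sqr; apply: ler_wsqrtr.
have : 0 <= (a1 * b2 - a2 * b1) ^+ 2 by rewrite sqr_ge0.
move=> h; nra.
Qed.

Lemma disp (T a b : R) (u s : R -> R * R) :
  measurable_fun `[0, T] (fun t => (u t).1) ->
  measurable_fun `[0, T] (fun t => (u t).2) ->
  (forall t, t \in `[0, T]%R -> (u t).1 ^+ 2 + (u t).2 ^+ 2 <= 1) ->
  (forall t, t \in `[0, T]%R ->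
         (\int[mu]_(tau in dr_Icc0 t) ((u tau).1)%:E = ((s t).1 - (s 0).1)%:E)%E /\
         (\int[mu]_(tau in dr_Icc0 t) ((u tau).2)%:E = ((s t).2 - (s 0).2)%:E)%E) ->
  0 <= a -> a <= b -> b <= T -> dr_dist (s b) (s a) <= b - a.
Proof.
move=> m1 m2 hb hI a0 ab bT.
set w1 := (s a).1 - (s b).1; set w2 := (s a).2 - (s b).2.
set N := dr_dist (s b) (s a).
have N0 : 0 <= N by apply: sqrtr_ge0.
have NN : N ^+ 2 = w1 ^+ 2 + w2 ^+ 2.
  rewrite /N /dr_dist sqr_sqrtr; last by rewrite /dr_sqdist addr_ge0 // sqr_ge0.
  rewrite /dr_sqdist /w1 /w2; ring.
have i1 : mu.-integrable `[0, T] (fun t => ((u t).1)%:E).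
  apply: int_u m1 _ => t ht; apply: le_trans (hb t ht); rewrite lerDl sqr_ge0 //.
have i2 : mu.-integrable `[0, T] (fun t => ((u t).2)%:E).
  apply: int_u m2 _ => t ht; apply: le_trans (hb t ht); rewrite lerDr sqr_ge0 //.
have ig : mu.-integrable `[0, T] (fun t => (w1 * (u t).1 + w2 * (u t).2)%:E).
  apply: eq_integrable (integrableD _ (integrableZl _ w1 i1) (integrableZl _ w2 i2)) => //.
have H1 : forall t, t \in `[0, T]%R ->
    (\int[mu]_(tau in dr_Icc0 t) (w1 * (u tau).1 + w2 * (u tau).2)%:E)%E =
    (w1 * (s t).1 + w2 * (s t).2 - (w1 * (s 0).1 + w2 * (s 0).2))%:E.
  move=> t ht; have [e1 e2] := hI t ht.
  have tT : t <= T by move: ht; rewrite in_itv /= => /andP[].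
  have sT : dr_Icc0 t `<=` `[0, T] by apply: subset_itvl; rewrite bnd_simp.
  have j1 : mu.-integrable (dr_Icc0 t) (fun x => ((u x).1)%:E).
    by apply: (integrableS _ _ _ i1) => //; exact: measurable_itv.
  have j2 : mu.-integrable (dr_Icc0 t) (fun x => ((u x).2)%:E) by apply: (integrableS _ _ _ i2) => //; exact: measurable_itv.
  under eq_integral => x _ do rewrite EFinD !EFinM.
  rewrite integralD; last 3 first.
  - exact: measurable_itv.
  - by apply: (integrableZl _ w1 j1); exact: measurable_itv.
  - by apply: (integrableZl _ w2 j2); exact: measurable_itv.
  rewrite integralZl; last 2 first.
  - exact: measurable_itv.
  - exact: j1.
  rewrite integralZl; last 2 first.
  - exact: measurable_itv.
  - exact: j2.
  rewrite e1 e2 -!EFinM -EFinD; congr EFin; ring.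
have H2 : forall t, a <= t <= b -> ((- N) *: 'X)^`().[t] <= w1 * (u t).1 + w2 * (u t).2.
  move=> t /andP[ta tb].
  have ht : t \in `[0, T]%R.
    by rewrite in_itv /= (le_trans a0 ta) (le_trans tb bT).
  rewrite derivZ derivX hornerE /= hornerE /=.
  have := cs ((s b).1 - (s a).1) ((s b).2 - (s a).2) (u t).1 (u t).2.
  have hu := hb t ht.
  have su : Num.sqrt ((u t).1 ^+ 2 + (u t).2 ^+ 2) <= 1.
    by rewrite -sqrtr1; apply: ler_wsqrtr.
  rewrite -/(dr_sqdist (s b) (s a)) -/(dr_dist (s b) (s a)) -/N => h.
  have h2 : N * Num.sqrt ((u t).1 ^+ 2 + (u t).2 ^+ 2) <= N by rewrite ler_piMr.
  rewrite /w1 /w2; nra.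
have := @Lcmp (fun t => w1 * (u t).1 + w2 * (u t).2) (fun t => w1 * (s t).1 + w2 * (s t).2)
   T a b ((- N) *: 'X) ig H1 a0 ab bT H2.
rewrite !hornerE /=.
have E : w1 * (s b).1 + w2 * (s b).2 - (w1 * (s a).1 + w2 * (s a).2) = - N ^+ 2.
  by rewrite NN /w1 /w2; ring.
rewrite E => h; nra.
Qed.

Definition K (c B z : R) := 3 * c * z - B * z ^+ 3.

Lemma Kdelta (c B d z : R) : 0 < B -> 0 <= d -> B * d ^+ 2 = c -> 0 <= z ->
  K c B z <= K c B d.
Proof.
move=> B0 d0 hc z0.
have h : 0 <= B * ((d - z) ^+ 2 * (2 * d + z)).
  by apply: mulr_ge0; [lra | apply: mulr_ge0; [exact: sqr_ge0 | lra]].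
have e : K c B d - K c B z = B * ((d - z) ^+ 2 * (2 * d + z)) by rewrite /K -hc; ring.
lra.
Qed.

Lemma Kmono (c B w z : R) : 0 < B -> 0 < w -> w <= z -> K c B w <= 0 -> K c B z <= K c B w.
Proof.
move=> B0 w0 wz Kw.
have h1 : 3 * c <= B * w ^+ 2.
  move: Kw; rewrite /K => Kw.
  have : w * (3 * c - B * w ^+ 2) <= 0 by move: Kw; congr (_ <= _); ring.
  rewrite pmulr_rle0 //; lra.
have h2 : 0 <= (z - w) * (B * (z ^+ 2 + z * w + w ^+ 2) - 3 * c).
  apply: mulr_ge0; first lra.
  have : B * w ^+ 2 <= B * (z ^+ 2 + z * w + w ^+ 2).
    rewrite ler_pM2l //. nra.
  lra.
have -> : K c B z = K c B w - (z - w) * (B * (z ^+ 2 + z * w + w ^+ 2) - 3 * c) by rewrite /K; ring.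
lra.
Qed.

Lemma Kd_pos (c B d : R) : 0 < B -> 0 < c -> 0 <= d -> B * d ^+ 2 = c -> 0 < K c B d.
Proof.
move=> B0 c0 d0 hc.
have dp : 0 < d.
  rewrite lt_neqAle d0 andbT; apply/eqP => d00; move: hc; rewrite -d00 expr0n /= mulr0 => c00.
  by move: c0; rewrite -c00 ltxx.
have -> : K c B d = 2 * c * d by rewrite /K -hc; ring.
by rewrite !mulr_gt0.
Qed.

Lemma case1 (c B d r z : R) : 0 < B -> 0 < c -> 0 <= d -> B * d ^+ 2 = c ->
  0 < z -> z <= r ->
  K c B r - K c B z <= 0 \/ K c B r - K c B z < K c B r + K c B d.
Proof.
move=> B0 c0 d0 hc z0 zr.
have := @Kd_pos c B d B0 c0 d0 hc => hd.
case: (lerP 0 (K c B z)) => hz.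
  by right; lra.
by left; have := @Kmono c B z r B0 z0 zr (ltW hz); lra.
Qed.

Lemma case2 (c B d r w z : R) : 0 < B -> 0 < c -> 0 <= d -> B * d ^+ 2 = c ->
  0 < w -> w <= z -> z <= r ->
  K c B r - 2 * K c B w + K c B z <= 0 \/
  K c B r - 2 * K c B w + K c B z < K c B r + K c B d.
Proof.
move=> B0 c0 d0 hc w0 wz zr.
case: (lerP (K c B w) 0) => hw.
  left; have := @Kmono c B w z B0 w0 wz hw; have := @Kmono c B w r B0 w0 (le_trans wz zr) hw; lra.
right; have := @Kdelta c B d z B0 d0 hc (ltW (lt_le_trans w0 wz)); lra.
Qed.

Lemma dist_sym (a b : R * R) : dr_dist a b = dr_dist b a.
Proof. by rewrite /dr_dist /dr_sqdist -!(sqrrN (a.1 - _)) -!(sqrrN (a.2 - _)) !opprB. Qed.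

Lemma dist_ge0 (a b : R * R) : 0 <= dr_dist a b.
Proof. exact: sqrtr_ge0. Qed.

Lemma sqdist_ge0 (a b : R * R) : 0 <= dr_sqdist a b.
Proof. by rewrite /dr_sqdist addr_ge0 // sqr_ge0. Qed.

Lemma dist_sqr (a b : R * R) : dr_dist a b ^+ 2 = dr_sqdist a b.
Proof. by rewrite /dr_dist sqr_sqrtr // sqdist_ge0. Qed.

Lemma tri (a b c : R * R) : dr_dist a c <= dr_dist a b + dr_dist b c.
Proof.
have h := cs (a.1 - b.1) (a.2 - b.2) (b.1 - c.1) (b.2 - c.2).
rewrite -/(dr_sqdist a b) -/(dr_sqdist b c) -/(dr_dist a b) -/(dr_dist b c) in h.
have e1 := dist_sqr a b; have e2 := dist_sqr b c; have e3 := dist_sqr a c.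
have := dist_ge0 a b; have := dist_ge0 b c; have := dist_ge0 a c.
have E : dr_sqdist a c = dr_sqdist a b + dr_sqdist b c +
   2 * ((a.1 - b.1) * (b.1 - c.1) + (a.2 - b.2) * (b.2 - c.2)) by rewrite /dr_sqdist; ring.
move=> h1 h2 h3; nra.
Qed.

Lemma p_le (x q : R * R) (r y : R) : 0 < r -> 0 <= y -> y <= r -> y <= dr_dist q x ->
  dr_p x r q <= 1 - y ^+ 2 / r ^+ 2.
Proof.
move=> r0 y0 yr yd.
have r2 : 0 < r ^+ 2 by rewrite exprn_gt0.
have hy : y ^+ 2 <= dr_sqdist q x by rewrite -dist_sqr; nra.
rewrite /dr_p ge_max; apply/andP; split.
  rewrite subr_ge0 ler_pdivrMr // mul1r; nra.
rewrite lerB // ler_pM2r // invr_gt0 //.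
Qed.

Lemma fR_lb (A B : R) (x q : R * R) (r y Rv : R) : 0 < r -> 0 < B -> 0 <= y -> y <= r ->
  y <= dr_dist q x -> A - B * (1 - y ^+ 2 / r ^+ 2) <= dr_fR A B x r Rv q.
Proof.
move=> r0 B0 y0 yr yd.
have hp := @p_le x q r y r0 y0 yr yd.
have h : A - B * (1 - y ^+ 2 / r ^+ 2) <= A - B * dr_p x r q.
  by rewrite lerB // ler_pM2l.
rewrite /dr_fR; case: ifP => // /andP[_ hn]; apply: (le_trans h); exact: ltW.
Qed.

End S.
Arguments K {R}. Arguments tri {R}. Arguments disp {R}. Arguments dist_sym {R}. Arguments Lcmp {R}. Arguments fR_lb {R}. Arguments case1 {R}. Arguments case2 {R}.


Local Close Scope classical_set_scope.

Theorem lemma4 (R : realType) (x : R * R) (r A B : R) (sphi spsi : R * R)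
    (Rc : R) :
  0 < r -> 0 < A -> A < B ->
  dr_dist sphi x = r -> dr_dist spsi x = r ->
  0 < Rc ->
  - (A - 2 / 3 * B) * r - dr_delta A B r * (A - B)
    - (dr_delta A B r) ^+ 3 / (3 * r ^+ 2) * B <= Rc ->
  forall (T : R) (u s : R -> R * R) (Rt : R -> R),
    draining_feasible A B x r sphi spsi Rc T u s Rt ->
    2 * r <= T.
Proof.
move=> r0 A0 AB hphi hpsi Rc0 hthr T u s Rt
  [m1 [m2 [hb [hI [ig [hR [[Rge [t0 ht0 Rt0]] [s0 [sT Rc_]]]]]]]]].
rewrite leNgt; apply/negP => hT.
have [t00 t0T] : 0 <= t0 /\ t0 <= T.
  by move: ht0; rewrite in_itv /= => /andP[].
have T0 : 0 <= T := le_trans t00 t0T.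
have B0 : 0 < B := lt_trans A0 AB.
have r2 : 0 < r ^+ 2 by rewrite exprn_gt0.
have lb1 : forall t, 0 <= t -> t <= T -> r - t <= dr_dist (s t) x.
  move=> t t0' tT.
  have h1 := tri (s 0) (s t) x.
  have h2 := disp T 0 t u s m1 m2 hb hI (le_refl 0) t0' tT.
  rewrite s0 hphi dist_sym in h1; rewrite -s0 in h1 *; lra.
have lb2 : forall t, 0 <= t -> t <= T -> r - (T - t) <= dr_dist (s t) x.
  move=> t t0' tT.
  have h1 := tri (s T) (s t) x.
  have h2 := disp T t T u s m1 m2 hb hI t0' tT (le_refl T).
  rewrite sT hpsi in h1; rewrite -sT in h1 *; lra.
set d := dr_delta A B r.
have d0 : 0 <= d by apply: sqrtr_ge0.
set c := r ^+ 2 * (B - A).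
have c0 : 0 < c by rewrite mulr_gt0 // subr_gt0.
have hd : B * d ^+ 2 = c.
  rewrite /d /dr_delta sqr_sqrtr; last by rewrite divr_ge0 ?ltW // mulr_ge0 ?ltW // subr_gt0.
  by rewrite /c; field; rewrite gt_eqF.
have ethr : (- (A - 2 / 3 * B) * r - d * (A - B) - d ^+ 3 / (3 * r ^+ 2) * B) * (3 * r ^+ 2)
   = K c B r + K c B d.
  by rewrite /K /c; field; rewrite gt_eqF.
set p1 : {poly R} := (A - B) *: 'X - (B / (3 * r ^+ 2)) *: ((r%:P - 'X) ^+ 3).
set p2 : {poly R} := (A - B) *: 'X + (B / (3 * r ^+ 2)) *: (('X + (r - T)%:P) ^+ 3).
have dp1 : forall t, (deriv p1).[t] = A - B * (1 - (r - t) ^+ 2 / r ^+ 2).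
  move=> t; rewrite /p1 derivB !derivZ derivX deriv_exp derivB derivC derivX !hornerE /=.
  by field; rewrite gt_eqF.
have dp2 : forall t, (deriv p2).[t] = A - B * (1 - (t + r - T) ^+ 2 / r ^+ 2).
  move=> t; rewrite /p2 derivD !derivZ derivX deriv_exp derivD derivC derivX !hornerE /=.
  by field; rewrite gt_eqF.
have ev1 : forall a b, p1.[b] - p1.[a] = - (K c B (r - a) - K c B (r - b)) / (3 * r ^+ 2).
  by move=> a b; rewrite /p1 !(hornerD, hornerN, hornerZ, hornerX, horner_exp, hornerC) /K /c; field; rewrite gt_eqF.
have ev2 : forall a b, p2.[b] - p2.[a] =
    - (K c B (b + r - T) - K c B (a + r - T)) / (3 * r ^+ 2).
  by move=> a b; rewrite /p2 !(hornerD, hornerN, hornerZ, hornerX, horner_exp, hornerC) /K /c; field; rewrite gt_eqF.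
have r3 : 0 < 3 * r ^+ 2 by rewrite mulr_gt0.
have L := Lcmp (fun t => dr_fR A B x r (Rt t) (s t)) Rt T.
have Rc1 : Rt 0 = Rc := Rc_.
case: (lerP t0 (T / 2)) => ht.
- have := L 0 t0 p1 ig hR (le_refl 0) t00 t0T.
  have H : forall t, 0 <= t <= t0 -> (deriv p1).[t] <= dr_fR A B x r (Rt t) (s t).
    move=> t /andP[t0' tt]; rewrite dp1; apply: fR_lb => //; try lra.
    by apply: lb1 => //; lra.
  move=> /(_ H); rewrite ev1 Rt0 Rc1 subr0 => h.
  have h' : Rc * (3 * r ^+ 2) <= K c B r - K c B (r - t0).
    rewrite -ler_pdivlMr //; move: h; rewrite mulNr; lra.
  have := case1 c B d r (r - t0) B0 c0 d0 hd _ _; case; try lra.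
  + move=> hh; have : Rc * (3 * r ^+ 2) <= 0 by lra.
    have : 0 < Rc * (3 * r ^+ 2) by rewrite mulr_gt0.
    lra.
  + move: hthr; rewrite -(ler_pM2r r3) ethr => hh h2; lra.
- have H1 : forall t, 0 <= t <= T / 2 -> (deriv p1).[t] <= dr_fR A B x r (Rt t) (s t).
    move=> t /andP[t0' tt]; rewrite dp1; apply: fR_lb => //; try lra.
    by apply: lb1 => //; lra.
  have H2 : forall t, T / 2 <= t <= t0 -> (deriv p2).[t] <= dr_fR A B x r (Rt t) (s t).
    move=> t /andP[t0' tt]; rewrite dp2; apply: fR_lb => //; try lra.
    by have := lb2 t ltac:(lra) ltac:(lra); lra.
  have := L 0 (T / 2) p1 ig hR (le_refl 0) ltac:(lra) ltac:(lra) H1.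
  have := L (T / 2) t0 p2 ig hR ltac:(lra) ltac:(lra) t0T H2.
  rewrite ev1 ev2 Rt0 Rc1 => ha hb'.
  set w := r - T / 2.
  have ew : T / 2 + r - T = w by rewrite /w; field.
  rewrite ew subr0 in ha hb'.
  have h' : Rc * (3 * r ^+ 2) <= K c B r - 2 * K c B w + K c B (t0 + r - T).
    have e : 0 - Rc = (Rt (T / 2) - Rc) + (0 - Rt (T / 2)) by ring.
    have : - (K c B r - 2 * K c B w + K c B (t0 + r - T)) / (3 * r ^+ 2) <= - Rc.
      have -> : - (K c B r - 2 * K c B w + K c B (t0 + r - T)) / (3 * r ^+ 2) =
        - (K c B r - K c B w) / (3 * r ^+ 2) + - (K c B (t0 + r - T) - K c B w) / (3 * r ^+ 2).
        by field; rewrite gt_eqF.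
      lra.
    move=> hh; rewrite -ler_pdivlMr //; rewrite mulNr in hh; lra.
  have := case2 c B d r w (t0 + r - T) B0 c0 d0 hd _ _ _; case; try (rewrite /w; lra).
  + move=> hh; have : Rc * (3 * r ^+ 2) <= 0 by lra.
    have : 0 < Rc * (3 * r ^+ 2) by rewrite mulr_gt0.
    lra.
  + move: hthr; rewrite -(ler_pM2r r3) ethr => hh h2; lra.
Qed.
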